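(* Let $n$ be a composite positive integer. Then there exists a normalized Latin square of size $n$ with entries in $\{1,\dots,n\}$ that is singular (its determinant as a real matrix is $0$).
   Context: A Latin square of size $n$ with entries in $\{1,\dots,n\}$ is an $n\times n$ matrix in which each of $1,\dots,n$ occurs exactly once in each row and each column; it is normalized if its first column is $(1,2,\dots,n)^T$. It is singular if it is not invertible as a real matrix. *)

(* Defs.v *)
From mathcomp Require Import all_boot all_order all_algebra.
Set Implicit Arguments. Unset Strict Implicit. Unset Printing Implicit Defensive.
Import GRing.Theory Num.Theory.

(* A Latin square of size n is encoded as L : 'M['I_n]_n, where the
   ordinal value k stands for the symbol k+1 in {1,...,n}. *)
Definition latin_square (n : nat) (L : 'M['I_n]_n) : Prop :=
  (forall i : 'I_n, injective (fun j => L i j)) /\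
  (forall j : 'I_n, injective (fun i => L i j)).

(* normalized: first column is (1,2,...,n)^T, i.e. L i 0 = i (shifted) *)
Definition normalized (n : nat) (L : 'M['I_n]_n) : Prop :=
  forall (i j : 'I_n), val j = 0%N -> L i j = i.

Definition latin_mx (n : nat) (L : 'M['I_n]_n) : 'M[int]_n :=
  \matrix_(i, j) (Posz (val (L i j)).+1).

Definition composite (n : nat) : bool := (1 < n)%N && ~~ prime n.

(* Main.v *)
Require Import Defs.
From mathcomp Require Import all_boot all_order all_algebra.
From mathcomp Require Import zify ring lra.
Local Open Scope ring_scope.
Import GRing.Theory Num.Theory.

Section Constr.
Variables a b : nat.
Hypothesis ha : (1 < a)%N.
Hypothesis hb : (1 < b)%N.

Definition fv (i j : nat) : nat :=
  (b * ((i %/ b + j %/ b) %% a) + (i %% b + j %% b) %% b)%N.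

Lemma fv_lt (i j : 'I_(a * b)) : (fv i j < a * b)%N.
Proof.
rewrite /fv.
have h1 : ((i %/ b + j %/ b) %% a < a)%N by rewrite ltn_pmod //; lia.
have h2 : ((i %% b + j %% b) %% b < b)%N by rewrite ltn_pmod //; lia.
nia.
Qed.

Definition Lm : 'M['I_(a * b)]_(a * b) :=
  \matrix_(i, j) Ordinal (fv_lt i j).

Lemma decomp (x y x' y' : nat) : (y < b)%N -> (y' < b)%N ->
  (b * x + y = b * x' + y')%N -> x = x' /\ y = y'.
Proof.
move=> h1 h2 e; have b0 : (0 < b)%N by lia.
have := congr1 (fun t => t %/ b)%N e; have := congr1 (fun t => t %% b)%N e.
rewrite /= ![(b * _)%N]mulnC !modnMDl !divnMDl // !modn_small // !divn_small //.
by rewrite !addn0.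
Qed.

Lemma modcancel (d p q q' : nat) : (q < d)%N -> (q' < d)%N ->
  ((p + q) %% d = (p + q') %% d)%N -> q = q'.
Proof.
move=> h1 h2 /eqP; rewrite eqn_modDl !modn_small // => /eqP //.
Qed.

Lemma divlt (i : 'I_(a * b)) : (i %/ b < a)%N.
Proof. rewrite ltn_divLR; last lia. have := ltn_ord i; move: (nat_of_ord i) => k; lia. Qed.

Lemma modlt (i : nat) : (i %% b < b)%N.
Proof. rewrite ltn_pmod //; lia. Qed.

Lemma fv_inj (i j j' : 'I_(a * b)) : fv i j = fv i j' -> j = j'.
Proof.
rewrite /fv => /decomp [] //; try exact: modlt.
move=> e1 e2.
have E1 := modcancel _ _ _ _ (divlt j) (divlt j') e1.
have E2 := modcancel _ _ _ _ (modlt j) (modlt j') e2.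
apply: val_inj => /=.
by rewrite (divn_eq j b) (divn_eq j' b) E1 E2.
Qed.

Lemma fv_sym i j : fv i j = fv j i.
Proof. by rewrite /fv (addnC (i %/ b)%N) (addnC (i %% b)%N). Qed.

Lemma Lm_latin : latin_square Lm.
Proof.
split=> [i j j' /= | j i i' /=]; rewrite !mxE => /(congr1 val) /= e.
  exact: fv_inj e.
by apply: (fv_inj j); rewrite fv_sym e fv_sym.
Qed.

Lemma Lm_norm : normalized Lm.
Proof.
move=> i j j0; apply: val_inj; rewrite mxE /= /fv j0 div0n mod0n !addn0.
rewrite (modn_small (divlt i)) modn_small ?modlt // mulnC -divn_eq //.
Qed.

Lemma sum_ind (m : nat) (F : 'I_m -> rat) c :
  \sum_k (k == c)%:R * F k = F c.
Proof.
rewrite (bigD1 c) //= eqxx mul1r big1 ?addr0 // => k /negbTE ->.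
by rewrite mul0r.
Qed.

Lemma Lm_det : \det (latin_mx Lm) = 0.
Proof.
have b0 : (0 < b)%N by lia.
have h0 : (0 < a * b)%N by nia.
have h1 : (1 < a * b)%N by nia.
have h2 : (b < a * b)%N by nia.
have h3 : (b.+1 < a * b)%N by nia.
pose c0 := Ordinal h0. pose c1 := Ordinal h1.
pose cb := Ordinal h2. pose cb1 := Ordinal h3.
apply/eqP; rewrite -(intr_eq0 rat) -det_map_mx -det_tr. apply/det0P.
exists (\row_k ((k == c0)%:R - (k==cb)%:R - (k==c1)%:R + (k==cb1)%:R : rat)).
  apply/eqP => /rowP /(_ c0); rewrite !mxE eqxx.
  have -> : (c0 == cb) = false by apply/eqP => /(congr1 val) /=; lia.
  have -> : (c0 == c1) = false by apply/eqP => /(congr1 val) /=; lia.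
  have -> : (c0 == cb1) = false by apply/eqP => /(congr1 val) /=; lia.
  by rewrite /= !subr0 ?addr0 => /eqP; rewrite ?oner_eq0.
apply/rowP => i; rewrite !mxE.
under eq_bigr => k _ do rewrite !mxE mulrDl !mulrBl.
rewrite big_split /= !sumrB /= !sum_ind /=.
have E : (fv i 0 + fv i b.+1 = fv i b + fv i 1)%N.
  rewrite /fv div0n mod0n divnn modnn b0 (divn_small hb) (modn_small hb).
  rewrite -addn1 divnDl ?dvdnn // divnn b0 (divn_small hb).
  rewrite modnDl (modn_small hb) !addn0 !addn1; lia.
rewrite -!rmorphB -rmorphD; apply/eqP; rewrite intr_eq0; apply/eqP.
lia.
Qed.

End Constr.

Theorem mainTheorem5 (n : nat) (hn : composite n) :
  exists L : 'M['I_n]_n,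
    [/\ latin_square L, normalized L & \det (latin_mx L) = 0].
Proof.
case/andP: hn => n1 np.
pose a := pdiv n. pose b := (n %/ a)%N.
have pa : prime a by exact: pdiv_prime.
have ha : (1 < a)%N by exact: prime_gt1.
have en : n = (a * b)%N by rewrite /b mulnC divnK // pdiv_dvd.
have hb : (1 < b)%N.
  case: b en => [|[|k]] en //; first by rewrite en muln0 in n1.
  by rewrite en muln1 pa in np.
rewrite en.
exists (@Lm a b ha hb); split; [exact: Lm_latin | exact: Lm_norm | exact: Lm_det].
Qed.
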